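(* Let $\Sigma=(\mathbb{N}_0,X,U,\mathscr{U},\phi)$ be a control system as in the standing setup and let $Q\subset X$ be a control set with $\operatorname{cl}\operatorname{Int}(Q)=\operatorname{cl}Q$. Then $Q$ is either equi-invariant in the mean or unstable in the mean.
   Context: Standing setup: $(X,d)$ is a metric space, $U$ is a compact metric space, and $F:X\times U\to X$ is a map such that $F_u:=F(\cdot,u)$ is continuous for every $u\in U$. Let $\mathscr U=U^{\mathbb N_0}$ with the product topology. For $\omega=(\omega_0,\omega_1,\dots)\in\mathscr U$, $x\in X$, set $\phi(0,x,\omega)=x$ and $\phi(k,x,\omega)=F_{\omega_{k-1}}\circ\cdots\circ F_{\omega_0}(x)$ for $k\ge1$. It is assumed that $\phi:\mathbb N_0\times X\times\mathscr U\to X$ is continuous. Notation: $\mathbb N=\{1,2,\dots\}$; $B(x,\delta)$ is the open ball; $d(y,Q)=\inf_{q\in Q}d(y,q)$; $\operatorname{Int}$ and $\operatorname{cl}$ denote interior and closure in $X$. Control set: $D\subset X$ is a control set if (i) for every $x\in D$ there is $\omega\in\mathscr U$ with $\phi(k,x,\omega)\in D$ for all $k\in\mathbb N_0$; (ii) for every $x\in D$, $D\subset\operatorname{cl}\mathcal O^+(x)$, where $\mathcal O^+(x)=\{\phi(m,x,\omega):m\in\mathbb N_0,\omega\in\mathscr U\}$; (iii) $D$ is maximal with (i) and (ii). $x\in Q$ is an equi-invariant point in the mean of $Q$ if for every $\varepsilon>0$ there exist $\delta>0$ and $\omega\in\mathscr U$ such that $\frac1n\sum_{i=0}^{n-1}d(\phi(i,y,\omega),Q)<\varepsilon$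 for all $n\in\mathbb N$ and all $y\in B(x,\delta)\cap Q$; $Q$ is equi-invariant in the mean if every point of $Q$ is such a point. $Q$ is unstable in the mean if there exists $\varepsilon>0$ such that for every $x\in Q$, every $\delta>0$ and every $\omega\in\mathscr U$ there exist $y\in B(x,\delta)\cap Q$ and $m\in\mathbb N$ with $\frac1m\sum_{i=0}^{m-1}d(\phi(i,y,\omega),Q)\ge\varepsilon$. *)

(* Defs.v *)
From Stdlib Require Import Reals List.
From Coquelicot Require Import Coquelicot.
Open Scope R_scope.

Definition is_metric {T : Type} (d : T -> T -> R) : Prop :=
  (forall x y, 0 <= d x y) /\
  (forall x y, d x y = 0 <-> x = y) /\
  (forall x y, d x y = d y x) /\
  (forall x y z, d x z <= d x y + d y z).

Definition m_open {T : Type} (d : T -> T -> R) (A : T -> Prop) : Prop :=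
  forall x, A x -> exists r, 0 < r /\ forall y, d x y < r -> A y.

Definition m_compact {T : Type} (d : T -> T -> R) : Prop :=
  forall (I : Type) (O : I -> T -> Prop),
    (forall i, m_open d (O i)) ->
    (forall u, exists i, O i u) ->
    exists l : list I, forall u, exists i, In i l /\ O i u.

Definition m_interior {X : Type} (d : X -> X -> R) (A : X -> Prop) : X -> Prop :=
  fun x => exists r, 0 < r /\ forall y, d x y < r -> A y.

Definition m_closure {X : Type} (d : X -> X -> R) (A : X -> Prop) : X -> Prop :=
  fun x => forall r, 0 < r -> exists y, A y /\ d x y < r.

(** Trajectory: phi 0 x w = x, phi (k+1) x w = F (phi k x w) (w k),
    i.e. phi k x w = F_{w_{k-1}} o ... o F_{w_0} (x). *)
Fixpoint traj {X U : Type} (F : X -> U -> X) (k : nat) (x : X) (w : nat -> U) : X :=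
  match k with
  | O => x
  | S k' => F (traj F k' x w) (w k')
  end.

(** Continuity of phi on N_0 x X x U^{N_0} (N_0 discrete, U^{N_0} with the
    product topology): unfolded via the standard neighbourhood base
    B(x,delta) x {w' | dU (w' i) (w i) < delta for all i < N}. *)
Definition traj_continuous {X U : Type} (d : X -> X -> R) (dU : U -> U -> R)
  (F : X -> U -> X) : Prop :=
  forall (k : nat) (x : X) (w : nat -> U) (eps : R), 0 < eps ->
    exists (delta : R) (N : nat), 0 < delta /\
      forall (y : X) (w' : nat -> U),
        d x y < delta ->
        (forall i, (i < N)%nat -> dU (w' i) (w i) < delta) ->
        d (traj F k x w) (traj F k y w') < eps.

Definition orbit_plus {X U : Type} (F : X -> U -> X) (x : X) : X -> Prop :=
  fun z => exists (m : nat) (w : nat -> U), z = traj F m x w.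

Definition ctrl_i {X U : Type} (F : X -> U -> X) (D : X -> Prop) : Prop :=
  forall x, D x -> exists w : nat -> U, forall k, D (traj F k x w).

Definition ctrl_ii {X U : Type} (d : X -> X -> R) (F : X -> U -> X)
  (D : X -> Prop) : Prop :=
  forall x, D x -> forall y, D y -> m_closure d (orbit_plus F x) y.

Definition control_set {X U : Type} (d : X -> X -> R) (F : X -> U -> X)
  (D : X -> Prop) : Prop :=
  ctrl_i F D /\ ctrl_ii d F D /\
  (forall D' : X -> Prop,
     (forall x, D x -> D' x) -> ctrl_i F D' -> ctrl_ii d F D' ->
     forall x, D' x -> D x).

Definition dist_set {X : Type} (d : X -> X -> R) (Q : X -> Prop) (y : X) : R :=
  real (Glb_Rbar (fun r => exists q, Q q /\ r = d y q)).

(** (1/n) * sum_{i=0}^{n-1} f i  (used for n >= 1). *)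
Definition mean (f : nat -> R) (n : nat) : R :=
  / INR n * sum_f_R0 f (n - 1).

Definition equi_inv_mean_point {X U : Type} (d : X -> X -> R) (F : X -> U -> X)
  (Q : X -> Prop) (x : X) : Prop :=
  forall eps, 0 < eps ->
    exists (delta : R) (w : nat -> U), 0 < delta /\
      forall (n : nat) (y : X), (1 <= n)%nat -> d x y < delta -> Q y ->
        mean (fun i => dist_set d Q (traj F i y w)) n < eps.

Definition equi_inv_mean {X U : Type} (d : X -> X -> R) (F : X -> U -> X)
  (Q : X -> Prop) : Prop :=
  forall x, Q x -> equi_inv_mean_point d F Q x.

Definition unstable_mean {X U : Type} (d : X -> X -> R) (F : X -> U -> X)
  (Q : X -> Prop) : Prop :=
  exists eps, 0 < eps /\
    forall x, Q x -> forall delta, 0 < delta -> forall w : nat -> U,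
      exists y, d x y < delta /\ Q y /\
        exists m : nat, (1 <= m)%nat /\
          mean (fun i => dist_set d Q (traj F i y w)) m >= eps.

(* Main.v *)
Require Import Defs.
From Stdlib Require Import Reals.
From Stdlib Require Import Lra Lia Classical Arith.
From Coquelicot Require Import Coquelicot.
Open Scope R_scope.

Lemma traj_shift {X U : Type} (F : X -> U -> X) j k x w :
  traj F (j + k) x w = traj F k (traj F j x w) (fun t => w (j + t)%nat).
Proof.
  induction k.
  - rewrite Nat.add_0_r; reflexivity.
  - rewrite Nat.add_succ_r. simpl. rewrite IHk. reflexivity.
Qed.

Lemma traj_ext {X U : Type} (F : X -> U -> X) k x w w' :
  (forall t, (t < k)%nat -> w t = w' t) -> traj F k x w = traj F k x w'.
Proof.
  induction k; intros H; simpl; auto.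
  rewrite IHk by (intros; apply H; lia). rewrite H by lia. reflexivity.
Qed.

Definition concat {U : Type} (m : nat) (w w' : nat -> U) : nat -> U :=
  fun t => if Nat.ltb t m then w t else w' (t - m)%nat.

Lemma traj_concat {X U : Type} (F : X -> U -> X) m k x w w' :
  traj F (m + k) x (concat m w w') = traj F k (traj F m x w) w'.
Proof.
  rewrite traj_shift.
  rewrite (traj_ext F m x (concat m w w') w).
  2:{ intros t ht. unfold concat. destruct (Nat.ltb_spec t m); [reflexivity|lia]. }
  apply traj_ext. intros t _. unfold concat.
  destruct (Nat.ltb_spec (m + t) m); [lia|]. f_equal. lia.
Qed.

Lemma traj_concat_le {X U : Type} (F : X -> U -> X) m i x w w' :
  (i <= m)%nat -> traj F i x (concat m w w') = traj F i x w.
Proof.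
  intros h. apply traj_ext. intros t ht. unfold concat.
  destruct (Nat.ltb_spec t m); [reflexivity|lia].
Qed.

Lemma cont_single {X U : Type} (d : X -> X -> R) (dU : U -> U -> R) (F : X -> U -> X)
  (hdU : is_metric dU) (hphi : traj_continuous d dU F) k x w eps :
  0 < eps -> exists delta, 0 < delta /\
    forall y, d x y < delta -> d (traj F k x w) (traj F k y w) < eps.
Proof.
  intros he. destruct (hphi k x w eps he) as [delta [N [hd H]]].
  exists delta; split; auto. intros y hy. apply H; auto.
  intros i _. destruct hdU as [_ [hz _]]. rewrite (proj2 (hz (w i) (w i)) eq_refl). lra.
Qed.

Lemma cont_unif {X U : Type} (d : X -> X -> R) (dU : U -> U -> R) (F : X -> U -> X)
  (hdU : is_metric dU) (hphi : traj_continuous d dU F) m x w eps :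
  0 < eps -> exists delta, 0 < delta /\
    forall y, d x y < delta -> forall i, (i <= m)%nat -> d (traj F i x w) (traj F i y w) < eps.
Proof.
  intros he. induction m.
  - destruct (cont_single d dU F hdU hphi 0 x w eps he) as [delta [hd H]].
    exists delta; split; auto. intros y hy i hi. replace i with 0%nat by lia. auto.
  - destruct IHm as [d1 [hd1 H1]].
    destruct (cont_single d dU F hdU hphi (S m) x w eps he) as [d2 [hd2 H2]].
    exists (Rmin d1 d2); split; [apply Rmin_pos; auto|].
    intros y hy i hi.
    pose proof (Rmin_l d1 d2). pose proof (Rmin_r d1 d2).
    destruct (Nat.eq_dec i (S m)) as [->|].
    + apply H2; lra.
    + apply H1; [lra|lia].
Qed.

Lemma orbit_trans {X U : Type} (F : X -> U -> X) x z b :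
  orbit_plus F x z -> orbit_plus F z b -> orbit_plus F x b.
Proof.
  intros [m [w ->]] [k [w' ->]]. exists (m + k)%nat, (concat m w w').
  rewrite traj_concat. reflexivity.
Qed.

Lemma orbit_in_closure {X U : Type} (d : X -> X -> R) (F : X -> U -> X)
  (hd : is_metric d) a b : orbit_plus F a b -> m_closure d (orbit_plus F a) b.
Proof.
  intros H r hr. exists b. split; auto. destruct hd as [_ [hz _]].
  rewrite (proj2 (hz b b) eq_refl). auto.
Qed.

Lemma closure_orbit_trans {X U : Type} (d : X -> X -> R) (dU : U -> U -> R) (F : X -> U -> X)
  (hd : is_metric d) (hdU : is_metric dU) (hphi : traj_continuous d dU F) a z b :
  m_closure d (orbit_plus F a) z -> m_closure d (orbit_plus F z) b ->
  m_closure d (orbit_plus F a) b.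
Proof.
  intros Haz Hzb r hr.
  destruct (Hzb (r/2)) as [c [[m [w ->]] hc]]; [lra|].
  destruct (cont_single d dU F hdU hphi m z w (r/2)) as [delta [hdel H]]; [lra|].
  destruct (Haz delta hdel) as [z' [Oz' hz']].
  exists (traj F m z' w). split.
  - apply orbit_trans with z'; auto. exists m, w; auto.
  - destruct hd as [_ [_ [_ htri]]].
    specialize (H z' hz'). specialize (htri b (traj F m z w) (traj F m z' w)). lra.
Qed.

Lemma ctrl_path {X U : Type} (d : X -> X -> R) (dU : U -> U -> R) (F : X -> U -> X)
  (hd : is_metric d) (hdU : is_metric dU) (hphi : traj_continuous d dU F)
  (Q : X -> Prop) (hQ : control_set d F Q) x w m :
  Q x -> Q (traj F m x w) -> forall i, (i <= m)%nat -> Q (traj F i x w).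
Proof.
  intros Qx Qm i hi. destruct hQ as [Hi [Hii Hmax]].
  set (D' := fun z => Q z \/ exists i, (i <= m)%nat /\ z = traj F i x w).
  refine (Hmax D' _ _ _ _ _).
  - intros; left; auto.
  - intros z [Qz | [j [hj ->]]].
    + destruct (Hi z Qz) as [w0 H0]. exists w0. intro k. left. auto.
    + destruct (Hi _ Qm) as [wp Hp].
      exists (concat (m - j) (fun t => w (j + t)%nat) wp). intro k.
      destruct (le_lt_dec k (m - j)).
      * right. exists (j + k)%nat. split; [lia|].
        rewrite traj_concat_le by lia. rewrite traj_shift. reflexivity.
      * left. replace k with ((m - j) + (k - (m - j)))%nat by lia.
        rewrite traj_concat. rewrite <- traj_shift.
        replace (j + (m - j))%nat with m by lia. apply Hp.
  - intros a Ha b Hb.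
    assert (hq : forall q, Q q -> m_closure d (orbit_plus F q) b).
    { intros q Qq. destruct Hb as [Qb | [j [hj ->]]].
      - apply Hii; auto.
      - apply closure_orbit_trans with (dU := dU) (z := x); auto.
        apply orbit_in_closure; auto. exists j, w; auto. }
    destruct Ha as [Qa | [j [hj ->]]].
    + apply hq; auto.
    + apply closure_orbit_trans with (dU := dU) (z := traj F m x w); auto.
      * apply orbit_in_closure; auto. exists (m - j)%nat, (fun t => w (j + t)%nat).
        rewrite <- traj_shift. f_equal. lia.
  - right. exists i. auto.
Qed.

Lemma dist_le {X : Type} (d : X -> X -> R) (hd : is_metric d) (Q : X -> Prop) p q :
  Q q -> 0 <= dist_set d Q p <= d p q.
Proof.
  intros Qq. unfold dist_set.
  destruct (Glb_Rbar_correct (fun r => exists q, Q q /\ r = d p q)) as [Hlb Hglb].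
  set (l := Glb_Rbar _) in *.
  assert (H1 : Rbar_le l (d p q)) by (apply Hlb; exists q; split; auto).
  assert (H2 : Rbar_le 0 l).
  { apply Hglb. intros r [q' [_ ->]]. simpl. apply hd. }
  destruct l; simpl in *; tauto.
Qed.

Fixpoint fsum (f : nat -> R) (n : nat) : R :=
  match n with O => 0 | S n => fsum f n + f n end.

Lemma fsum_sf f n : sum_f_R0 f n = fsum f (S n).
Proof. induction n; simpl in *; [lra|]. rewrite IHn. reflexivity. Qed.

Lemma mean_lt f n e : (1 <= n)%nat -> (mean f n < e <-> fsum f n < INR n * e).
Proof.
  intros hn. unfold mean. destruct n; [lia|].
  replace (S n - 1)%nat with n by lia. rewrite fsum_sf.
  set (s := fsum f (S n)). set (N := INR (S n)).
  assert (hN : 0 < N) by (apply lt_0_INR; lia).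
  split; intro H.
  - apply Rmult_lt_compat_l with (r := N) in H; auto.
    replace (N * (/ N * s)) with s in H by (field; lra). lra.
  - apply Rmult_lt_compat_l with (r := / N) in H; [|apply Rinv_0_lt_compat; lra].
    replace (/ N * (N * e)) with e in H by (field; lra). lra.
Qed.

Lemma fsum_add f m k : fsum f (m + k) = fsum f m + fsum (fun j => f (m + j)%nat) k.
Proof.
  induction k; simpl.
  - rewrite Nat.add_0_r; lra.
  - rewrite Nat.add_succ_r. simpl. rewrite IHk. lra.
Qed.

Lemma fsum_le f n c : (forall i, (i < n)%nat -> f i <= c) -> fsum f n <= INR n * c.
Proof.
  induction n; intros H; [simpl; lra|]. cbn [fsum].
  rewrite S_INR. assert (f n <= c) by (apply H; lia).
  assert (fsum f n <= INR n * c) by (apply IHn; intros; apply H; lia). lra.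
Qed.

Lemma fsum_ext f g n : (forall i, (i < n)%nat -> f i = g i) -> fsum f n = fsum g n.
Proof.
  induction n; intros H; simpl; auto. rewrite IHn by (intros; apply H; lia).
  rewrite H by lia. reflexivity.
Qed.

Definition Pm {X U : Type} (d : X -> X -> R) (F : X -> U -> X) (Q : X -> Prop) x e :=
  exists (delta : R) (w : nat -> U), 0 < delta /\
    forall (n : nat) (y : X), (1 <= n)%nat -> d x y < delta -> Q y ->
      mean (fun i => dist_set d Q (traj F i y w)) n < e.

Lemma key {X U : Type} (d : X -> X -> R) (dU : U -> U -> R) (F : X -> U -> X)
  (hd : is_metric d) (hdU : is_metric dU) (hphi : traj_continuous d dU F)
  (Q : X -> Prop) (hQ : control_set d F Q)
  (hint : forall x, m_closure d (m_interior d Q) x <-> m_closure d Q x)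
  x x1 eps : Q x -> Q x1 -> 0 < eps -> Pm d F Q x1 (eps / 2) -> Pm d F Q x eps.
Proof.
  intros Qx Qx1 he [d1 [w1 [hd1 H1]]].
  pose proof hd as [hpos [hzero [hsym htri]]].
  assert (dxx : forall a, d a a = 0) by (intro a; apply hzero; auto).
  assert (hcl : m_closure d (m_interior d Q) x1).
  { apply hint. intros r hr. exists x1. split; auto. rewrite dxx; lra. }
  destruct (hcl (d1 / 2)) as [z [[r [hr Hr]] hz]]; [lra|].
  assert (Qz : Q z) by (apply Hr; rewrite dxx; lra).
  set (rho := Rmin r (d1 / 2) / 2).
  assert (hrho : 0 < rho) by (unfold rho; assert (0 < Rmin r (d1/2)) by (apply Rmin_pos; lra); lra).
  assert (hrho1 : 2 * rho <= r) by (unfold rho; pose proof (Rmin_l r (d1/2)); lra).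
  assert (hrho2 : 2 * rho <= d1 / 2) by (unfold rho; pose proof (Rmin_r r (d1/2)); lra).
  destruct hQ as [Hi [Hii Hmax]].
  destruct (Hii x Qx z Qz rho hrho) as [c [[m [w ->]] hc]].
  assert (Qc : Q (traj F m x w)) by (apply Hr; lra).
  assert (Hpath : forall i, (i <= m)%nat -> Q (traj F i x w))
    by (apply ctrl_path with d dU; auto; split; auto).
  destruct (cont_unif d dU F hdU hphi m x w (Rmin (eps / 2) rho)) as [dl [hdl Hdl]].
  { apply Rmin_pos; lra. }
  pose proof (Rmin_l (eps/2) rho). pose proof (Rmin_r (eps/2) rho).
  exists dl, (concat m w w1). split; auto.
  intros n y hn hy Qy. rewrite mean_lt by auto.
  set (f := fun i => dist_set d Q (traj F i y (concat m w w1))).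
  assert (HA : forall i, (i <= m)%nat -> f i <= eps / 2).
  { intros i hi. unfold f. rewrite traj_concat_le by auto.
    destruct (dist_le d hd Q (traj F i y w) (traj F i x w)) as [_ h]; auto.
    rewrite hsym in h. specialize (Hdl y hy i hi). lra. }
  assert (hnpos : 0 < INR n) by (apply lt_0_INR; lia).
  destruct (le_lt_dec n m).
  - assert (fsum f n <= INR n * (eps / 2)) by (apply fsum_le; intros; apply HA; lia).
    assert (INR n * (eps / 2) < INR n * eps) by (apply Rmult_lt_compat_l; lra). lra.
  - replace n with (m + (n - m))%nat by lia. set (k := (n - m)%nat).
    rewrite fsum_add. rewrite plus_INR.
    assert (h1 : fsum f m <= INR m * (eps / 2)) by (apply fsum_le; intros; apply HA; lia).
    set (y' := traj F m y w).
    assert (hzy : d z y' < 2 * rho).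
    { specialize (Hdl y hy m (le_n m)). specialize (htri z (traj F m x w) y'). unfold y' in *. lra. }
    assert (Qy' : Q y') by (apply Hr; lra).
    assert (hxy' : d x1 y' < d1) by (specialize (htri x1 z y'); lra).
    assert (hk : (1 <= k)%nat) by (unfold k; lia).
    specialize (H1 k y' hk hxy' Qy'). rewrite mean_lt in H1 by auto.
    rewrite (fsum_ext (fun j => f (m + j)%nat) (fun i => dist_set d Q (traj F i y' w1))).
    2:{ intros i _. unfold f, y'; cbv beta; rewrite traj_concat. reflexivity. }
    assert (0 <= INR m) by apply pos_INR.
    assert (0 < INR k) by (apply lt_0_INR; lia).
    nra.
Qed.

Theorem mainTheorem8
  (X U : Type) (d : X -> X -> R) (dU : U -> U -> R) (F : X -> U -> X)
  (hd : is_metric d) (hdU : is_metric dU) (hUc : m_compact dU)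
  (hFc : forall (u : U) (x : X) (eps : R), 0 < eps ->
           exists delta, 0 < delta /\ forall y, d x y < delta -> d (F x u) (F y u) < eps)
  (hphi : traj_continuous d dU F)
  (Q : X -> Prop) (hQ : control_set d F Q)
  (hint : forall x, m_closure d (m_interior d Q) x <-> m_closure d Q x) :
  equi_inv_mean d F Q \/ unstable_mean d F Q.
Proof.
  destruct (classic (exists x0 e0, Q x0 /\ 0 < e0 /\ ~ Pm d F Q x0 e0))
    as [[x0 [e0 [Qx0 [he0 HP]]]] | Hno].
  - right. exists (e0 / 2). split; [lra|].
    intros x Qx delta hdel w.
    apply NNPP. intro Hn. apply HP.
    apply key with dU x; auto.
    exists delta, w. split; auto. intros n y hn hy Qy.
    apply Rnot_le_lt. intro Hge. apply Hn. exists y. split; auto. split; auto.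
    exists n. split; auto. lra.
  - left. intros x Qx e he. apply NNPP. intro Hn. apply Hno.
    exists x, e. split; auto.
Qed.
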